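(* Let $\mathfrak g$ be a Lie algebra over a field $\mathbb{K}$ of characteristic zero. Then $|U(\mathfrak g)|=\bigoplus_{m=0}^\infty|\mathrm{Sym}^m\mathfrak g|$, i.e. $|U(\mathfrak g)|$ is the direct sum of the images $|\mathrm{Sym}^m\mathfrak g|$ of the subspaces $\mathrm{Sym}^m\mathfrak g\subset U(\mathfrak g)$.
   Context: $|U(\mathfrak g)|=U(\mathfrak g)/[U(\mathfrak g),U(\mathfrak g)]$, where $[U(\mathfrak g),U(\mathfrak g)]$ is the span of $ab-ba$, with projection $u\mapsto|u|$. $\mathrm{Sym}^m\mathfrak g$ is identified with a subspace of $U(\mathfrak g)$ via the symmetrization map $x_1\cdots x_m\mapsto\frac1{m!}\sum_{\sigma\in\mathfrak S_m}x_{\sigma(1)}\cdots x_{\sigma(m)}$, so that $U(\mathfrak g)=\bigoplus_{m\ge0}\mathrm{Sym}^m\mathfrak g$ (PBW); $|\mathrm{Sym}^m\mathfrak g|$ denotes the image of this subspace in $|U(\mathfrak g)|$. *)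

(* Defs.v *)
From HB Require Import structures.
From mathcomp Require Import all_boot all_order all_fingroup all_algebra.
Set Implicit Arguments. Unset Strict Implicit. Unset Printing Implicit Defensive.
Import Order.TTheory GRing.Theory Num.Theory.
Local Open Scope ring_scope.

Definition is_lie_bracket (K : fieldType) (V : lmodType K) (br : V -> V -> V) : Prop :=
  [/\ forall (a : K) (x y z : V), br (a *: x + y) z = a *: br x z + br y z,
      forall (a : K) (x y z : V), br x (a *: y + z) = a *: br x y + br x z,
      forall x : V, br x x = 0
    & forall x y z : V, br x (br y z) + br y (br z x) + br z (br x y) = 0].

Definition is_linear_map (K : fieldType) (V : lmodType K) (W : lmodType K) (f : V -> W) : Prop :=
  forall (a : K) (x y : V), f (a *: x + y) = a *: f x + f y.

Definition is_lie_map (K : fieldType) (V : lmodType K) (br : V -> V -> V)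
  (B : algType K) (f : V -> B) : Prop :=
  is_linear_map f /\ forall x y, f (br x y) = f x * f y - f y * f x.

Definition is_alg_hom (K : fieldType) (A B : algType K) (h : A -> B) : Prop :=
  [/\ is_linear_map h, h 1 = 1 & forall u v, h (u * v) = h u * h v].

Definition is_enveloping (K : fieldType) (V : lmodType K) (br : V -> V -> V)
  (U : algType K) (iota : V -> U) : Prop :=
  is_lie_map br iota /\
  forall (B : algType K) (f : V -> B), is_lie_map br f ->
    (exists h : U -> B, is_alg_hom h /\ forall x, h (iota x) = f x) /\
    (forall h1 h2 : U -> B, is_alg_hom h1 -> is_alg_hom h2 ->
       (forall x, h1 (iota x) = h2 (iota x)) -> forall u, h1 u = h2 u).

Definition symmetrize (K : fieldType) (V : lmodType K) (U : algType K)
  (iota : V -> U) (m : nat) (x : m.-tuple V) : U :=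
  (m`!%:R : K)^-1 *: \sum_(s : 'S_m) \prod_(i < m) iota (tnth x (s i)).

(* u lies in Sym^m g, viewed as a subspace of U(g) via symmetrization *)
Definition in_Sym (K : fieldType) (V : lmodType K) (U : algType K)
  (iota : V -> U) (m : nat) (u : U) : Prop :=
  exists (n : nat) (c : 'I_n -> K) (xs : 'I_n -> m.-tuple V),
    u = \sum_(j < n) c j *: symmetrize iota (xs j).

Definition in_comm (K : fieldType) (U : algType K) (u : U) : Prop :=
  exists (n : nat) (a b : 'I_n -> U), u = \sum_(j < n) (a j * b j - b j * a j).

(* Main.v *)
Require Import Defs.
From HB Require Import structures.
From mathcomp Require Import all_boot all_order all_fingroup all_algebra.
From mathcomp Require Import boolp.
Set Implicit Arguments. Unset Strict Implicit. Unset Printing Implicit Defensive.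
Import Order.TTheory GRing.Theory Num.Theory.
Local Open Scope ring_scope.

Section SubAlgS.
Variables (K : fieldType) (A : algType K) (Q : A -> Prop).
Hypothesis Q1 : Q 1.
Hypothesis Q0 : Q 0.
Hypothesis QD : forall x y, Q x -> Q y -> Q (x + y).
Hypothesis QZ : forall (k : K) x, Q x -> Q (k *: x).
Hypothesis QM : forall x y, Q x -> Q y -> Q (x * y).

Definition Pb (u : A) : bool := `[< Q u >].

Lemma Pb_closed : GRing.subsemialg_closed Pb.
Proof.
split.
- by rewrite /Pb unfold_in; apply/asboolP.
- split; first by rewrite unfold_in; apply/asboolP.
  by move=> x y; rewrite !unfold_in => /asboolP hx /asboolP hy; apply/asboolP; apply: QD.
- by move=> k x; rewrite !unfold_in => /asboolP hx; apply/asboolP; apply: QZ.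
- by move=> x y; rewrite !unfold_in => /asboolP hx /asboolP hy; apply/asboolP; apply: QM.
Qed.

HB.instance Definition _ := GRing.isSubalgClosed.Build K A Pb Pb_closed.

Definition SA := {x : A | Pb x}.
HB.instance Definition _ := [isSub for (@proj1_sig A Pb) : SA -> A].
HB.instance Definition _ := [Choice of SA by <:].
HB.instance Definition _ := [SubChoice_isSubAlgebra of SA by <:].

Lemma SA_test (x y : SA) : val (x * y) = val x * val y.
Proof. by []. Qed.
Variables (V : lmodType K) (br : V -> V -> V) (iota : V -> A).
Hypothesis Henv : is_enveloping br iota.
Hypothesis Qi : forall x, Q (iota x).

Lemma Pbi x : Pb (iota x). Proof. by apply/asboolP. Qed.
Definition fS (x : V) : SA := exist _ (iota x) (Pbi x).

Lemma fS_lie : is_lie_map br fS.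
Proof.
case: Henv => [[Hl Hb] _]; split.
- by move=> a x y; apply: val_inj; rewrite /= Hl.
- by move=> x y; apply: val_inj; rewrite /= Hb.
Qed.

Lemma gen_all u : Q u.
Proof.
case: (Henv) => _ /(_ SA fS fS_lie) [[h [[hl h1 hm] hi]] _].
case: (Henv) => _ /(_ A iota (proj1 Henv)) [_ uniq].
have ha : is_alg_hom (fun u => val (h u)).
  split.
  + by move=> a x y; rewrite hl.
  + by rewrite h1.
  + by move=> x y; rewrite hm.
have hid : is_alg_hom (@id A) by [].
have e : val (h u) = u.
  by apply: (uniq _ _ ha hid) => x /=; rewrite hi.
by move: (valP (h u)); rewrite e => /asboolP.
Qed.
End SubAlgS.

Section OpS.
Variables (K : fieldType) (U : algType K).

Record LF := MkLF { lfv :> U -> U; lfP : forall (k : K) x y, lfv (k *: x + y) = k *: lfv x + lfv y }.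

Lemma lf_ext (f g : LF) : (forall v, f v = g v) -> f = g.
Proof.
case: f g => [f fP] [g gP] /= e.
have ef : f = g by apply: funext.
subst g; congr MkLF; apply: Prop_irrelevance.
Qed.

HB.instance Definition _ := gen_eqMixin LF.
HB.instance Definition _ := gen_choiceMixin LF.

Program Definition lf0 : LF := @MkLF (fun _ => 0) _.
Next Obligation. by rewrite scaler0 addr0. Qed.
Program Definition lfopp (f : LF) : LF := @MkLF (fun v => - f v) _.
Next Obligation. by rewrite lfP opprD scalerN. Qed.
Program Definition lfadd (f g : LF) : LF := @MkLF (fun v => f v + g v) _.
Next Obligation. by rewrite !lfP scalerDr addrACA. Qed.
Program Definition lfscale (a : K) (f : LF) : LF := @MkLF (fun v => a *: f v) _.
Next Obligation. by rewrite lfP scalerDr !scalerA mulrC. Qed.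

Lemma lfaddA : associative lfadd.
Proof. by move=> f g h; apply: lf_ext => v /=; rewrite addrA. Qed.
Lemma lfaddC : commutative lfadd.
Proof. by move=> f g; apply: lf_ext => v /=; rewrite addrC. Qed.
Lemma lfadd0 : left_id lf0 lfadd.
Proof. by move=> f; apply: lf_ext => v /=; rewrite add0r. Qed.
Lemma lfaddN : left_inverse lf0 lfopp lfadd.
Proof. by move=> f; apply: lf_ext => v /=; rewrite addNr. Qed.
HB.instance Definition _ := GRing.isZmodule.Build LF lfaddA lfaddC lfadd0 lfaddN.

Lemma lfscaleA a b (f : LF) : lfscale a (lfscale b f) = lfscale (a * b) f.
Proof. by apply: lf_ext => v /=; rewrite scalerA. Qed.
Lemma lfscale1 : left_id 1 lfscale.
Proof. by move=> f; apply: lf_ext => v /=; rewrite scale1r. Qed.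
Lemma lfscaleDr : right_distributive lfscale +%R.
Proof. by move=> a f g; apply: lf_ext => v /=; rewrite scalerDr. Qed.
Lemma lfscaleDl (f : LF) : {morph lfscale^~ f : a b / a + b}.
Proof. by move=> a b; apply: lf_ext => v /=; rewrite scalerDl. Qed.
HB.instance Definition _ := GRing.Zmodule_isLmodule.Build K LF lfscaleA lfscale1 lfscaleDr lfscaleDl.

Lemma lfE_add (f g : LF) v : (f + g) v = f v + g v. Proof. by []. Qed.
Lemma lfE_scale a (f : LF) v : (a *: f) v = a *: f v. Proof. by []. Qed.
Lemma lfE_0 v : (0 : LF) v = 0. Proof. by []. Qed.
Lemma lfE_opp (f : LF) v : (- f) v = - f v. Proof. by []. Qed.

Record Op := MkOp { opv :> LF -> LF; opP : forall (k : K) f g, opv (k *: f + g) = k *: opv f + opv g }.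

Lemma op_ext (p q : Op) : (forall f, p f = q f) -> p = q.
Proof.
case: p q => [p pP] [q qP] /= e.
have ef : p = q by apply: funext.
subst q; congr MkOp; apply: Prop_irrelevance.
Qed.

HB.instance Definition _ := gen_eqMixin Op.
HB.instance Definition _ := gen_choiceMixin Op.

Program Definition op0 : Op := @MkOp (fun _ => 0) _.
Next Obligation. by rewrite scaler0 addr0. Qed.
Program Definition opopp (p : Op) : Op := @MkOp (fun f => - p f) _.
Next Obligation. by rewrite opP opprD scalerN. Qed.
Program Definition opadd (p q : Op) : Op := @MkOp (fun f => p f + q f) _.
Next Obligation. by rewrite !opP scalerDr addrACA. Qed.
Program Definition opscale (a : K) (p : Op) : Op := @MkOp (fun f => a *: p f) _.
Next Obligation. by rewrite opP scalerDr !scalerA mulrC. Qed.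
Program Definition op1 : Op := @MkOp (fun f => f) _.
Program Definition opmul (p q : Op) : Op := @MkOp (fun f => p (q f)) _.
Next Obligation. by rewrite !opP. Qed.

Lemma opaddA : associative opadd.
Proof. by move=> f g h; apply: op_ext => v /=; rewrite addrA. Qed.
Lemma opaddC : commutative opadd.
Proof. by move=> f g; apply: op_ext => v /=; rewrite addrC. Qed.
Lemma opadd0 : left_id op0 opadd.
Proof. by move=> f; apply: op_ext => v /=; rewrite add0r. Qed.
Lemma opaddN : left_inverse op0 opopp opadd.
Proof. by move=> f; apply: op_ext => v /=; rewrite addNr. Qed.
HB.instance Definition _ := GRing.isZmodule.Build Op opaddA opaddC opadd0 opaddN.

Lemma opmulA : associative opmul.
Proof. by move=> p q r; apply: op_ext. Qed.
Lemma opmul1 : left_id op1 opmul.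
Proof. by move=> p; apply: op_ext. Qed.
Lemma opmulr1 : right_id op1 opmul.
Proof. by move=> p; apply: op_ext. Qed.
Lemma opmulDl : left_distributive opmul +%R.
Proof. by move=> p q r; apply: op_ext. Qed.
Lemma opmulDr : right_distributive opmul +%R.
Proof.
move=> p q r; apply: op_ext => f /=.
by have := opP p 1 (q f) (r f); rewrite !scale1r.
Qed.
Program Definition lfid : LF := @MkLF (fun v => v) _.
Lemma op1_neq0 : op1 != 0.
Proof.
apply/eqP => /(congr1 (fun p : Op => p lfid)) /= /(congr1 (fun f : LF => f 1)).
by rewrite lfE_0 /=; apply/eqP; rewrite oner_neq0.
Qed.
HB.instance Definition _ := GRing.Zmodule_isNzRing.Build Op opmulA opmul1 opmulr1 opmulDl opmulDr op1_neq0.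
Lemma opscaleA a b (p : Op) : opscale a (opscale b p) = opscale (a * b) p.
Proof. by apply: op_ext => v /=; rewrite scalerA. Qed.
Lemma opscale1 : left_id 1 opscale.
Proof. by move=> f; apply: op_ext => v /=; rewrite scale1r. Qed.
Lemma opscaleDr : right_distributive opscale +%R.
Proof. by move=> a f g; apply: op_ext => v /=; rewrite scalerDr. Qed.
Lemma opscaleDl (f : Op) : {morph opscale^~ f : a b / a + b}.
Proof. by move=> a b; apply: op_ext => v /=; rewrite scalerDl. Qed.
HB.instance Definition _ := GRing.Zmodule_isLmodule.Build K Op opscaleA opscale1 opscaleDr opscaleDl.
Lemma opscalerAl (a : K) (p q : Op) : a *: (p * q) = (a *: p) * q.
Proof. by apply: op_ext. Qed.
HB.instance Definition _ := GRing.Lmodule_isLalgebra.Build K Op opscalerAl.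
Lemma opscalerAr (a : K) (p q : Op) : a *: (p * q) = p * (a *: q).
Proof.
apply: op_ext => f /=; have := opP p a (q f) 0; rewrite !addr0 => ->.
have p0 : p 0 = 0.
  have := opP p 1 0 0; rewrite scaler0 addr0 scale1r => /eqP.
  by rewrite -subr_eq0 opprD addrA subrr add0r oppr_eq0 => /eqP.
by rewrite p0 addr0.
Qed.
HB.instance Definition _ := GRing.Lalgebra_isAlgebra.Build K Op opscalerAr.

Lemma opE_mul (p q : Op) f : (p * q) f = p (q f). Proof. by []. Qed.
Lemma opE_add (p q : Op) f : (p + q) f = p f + q f. Proof. by []. Qed.
Lemma opE_scale a (p : Op) f : (a *: p) f = a *: p f. Proof. by []. Qed.
Lemma opE_1 f : (1 : Op) f = f. Proof. by []. Qed.
End OpS.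

Lemma zm (M : zmodType) (a b c d X Y : M): a - b + (c - d) = a + X + (Y + c) - (b + Y + (X + d)).
Proof.
have -> : a + X + (Y + c) = (a + c) + (X + Y) by rewrite (addrC Y c) addrACA.
have -> : b + Y + (X + d) = (b + d) + (X + Y) by rewrite (addrC X d) addrACA (addrC Y X).
by rewrite (addrC (b + d)) addrKA opprD addrACA.
Qed.

Section Main.
Variables (K : fieldType) (V : lmodType K) (br : V -> V -> V) (U : algType K) (iota : V -> U).
Hypothesis Henv : is_enveloping br iota.

Lemma iotaL a x y : iota (a *: x + y) = a *: iota x + iota y.
Proof. by case: Henv => [[]]. Qed.
Lemma iotaB x y : iota (br x y) = iota x * iota y - iota y * iota x.
Proof. by case: Henv => [[]]. Qed.

Lemma lfB (f : LF U) a b : f (a - b) = f a - f b.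
Proof. by have := lfP f (-1) b a; rewrite scaleN1r addrC => ->; rewrite scaleN1r addrC. Qed.
Lemma lfD (f : LF U) a b : f (a + b) = f a + f b.
Proof. by have := lfP f 1 a b; rewrite !scale1r. Qed.

Program Definition phiF (x : V) (f : LF U) : LF U :=
  @MkLF _ U (fun v => iota x * f v + f (v * iota x)) _.
Next Obligation.
by rewrite mulrDl -scalerAl !lfP mulrDr -scalerAr scalerDr addrACA.
Qed.
Program Definition phi (x : V) : Op U := @MkOp _ U (phiF x) _.
Next Obligation.
by apply: lf_ext => v /=; rewrite mulrDr -scalerAr scalerDr addrACA.
Qed.

Lemma phi_lie : is_lie_map br phi.
Proof.
split.
- move=> a x y; apply: op_ext => f; apply: lf_ext => v /=.
  rewrite iotaL mulrDl mulrDr -scalerAl -scalerAr lfP.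
  by rewrite scalerDr addrACA.
- move=> x y; apply: op_ext => f; apply: lf_ext => v /=.
  rewrite iotaB mulrBr lfB mulrBl !mulrDr !mulrA.
  exact: zm.
Qed.

Definition word (xs : seq V) : U := \prod_(x <- xs) iota x.

Lemma word_cons x xs : word (x :: xs) = iota x * word xs.
Proof. by rewrite /word big_cons. Qed.
Lemma word_nil : word [::] = 1.
Proof. by rewrite /word big_nil. Qed.
Lemma word_cat xs ys : word (xs ++ ys) = word xs * word ys.
Proof. by rewrite /word big_cat. Qed.

Fixpoint masks (n : nat) : seq (seq bool) :=
  if n is n'.+1 then map (cons true) (masks n') ++ map (cons false) (masks n')
  else [:: [::]].

Lemma size_masks n : size (masks n) = (2 ^ n)%N.
Proof. by elim: n => //= n IH; rewrite size_cat !size_map IH expnS mul2n addnn. Qed.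

Lemma masks_size n b : b \in masks n -> size b = n.
Proof.
elim: n b => [|n IH] b /=; first by rewrite inE => /eqP ->.
by rewrite mem_cat => /orP [] /mapP [b' /IH <- ->].
Qed.

Variables (h : U -> Op U).
Hypothesis hh : is_alg_hom h.
Hypothesis hi : forall x, h (iota x) = phi x.

Lemma hL a u w : h (a *: u + w) = a *: h u + h w.
Proof. by case: hh. Qed.
Lemma hM u w : h (u * w) = h u * h w.
Proof. by case: hh. Qed.
Lemma h0 : h 0 = 0.
Proof.
have := hL 1 0 0; rewrite scaler0 addr0 scale1r => /eqP.
by rewrite -subr_eq0 opprD addrA subrr add0r oppr_eq0 => /eqP.
Qed.
Lemma h1 : h 1 = 1.
Proof. by case: hh. Qed.
Lemma hD u w : h (u + w) = h u + h w.
Proof. by have := hL 1 u w; rewrite !scale1r. Qed.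
Lemma hZ a u : h (a *: u) = a *: h u.
Proof. by have := hL a u 0; rewrite !addr0 h0 addr0. Qed.

Lemma hword ys f v : h (word ys) f v =
  \sum_(b <- masks (size ys)) word (mask b ys) * f (v * word (mask (map negb b) ys)).
Proof.
elim: ys f v => [|y ys IH] f v /=.
  by rewrite word_nil h1 big_seq1 /= word_nil mul1r mulr1.
rewrite word_cons hM hi opE_mul /= !IH big_cat /= !big_map /=.
rewrite mulr_sumr; congr (_ + _); apply: eq_bigr => b _.
  by rewrite word_cons mulrA.
by rewrite word_cons mulrA.
Qed.


Definition T (u : U) : U := h u (lfid U) 1.

Lemma TL a u w : T (a *: u + w) = a *: T u + T w.
Proof. by rewrite /T hL. Qed.
Lemma T0 : T 0 = 0.
Proof. by rewrite /T h0. Qed.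
Lemma TD u w : T (u + w) = T u + T w.
Proof. by have := TL 1 u w; rewrite !scale1r. Qed.
Lemma TZ a u : T (a *: u) = a *: T u.
Proof. by have := TL a u 0; rewrite !addr0 T0 addr0. Qed.
Lemma TN u : T (- u) = - T u.
Proof. by rewrite -scaleN1r TZ scaleN1r. Qed.
Lemma TB u w : T (u - w) = T u - T w.
Proof. by rewrite TD TN. Qed.
Lemma Tsum (I : Type) (r : seq I) (P : pred I) (F : I -> U) :
  T (\sum_(i <- r | P i) F i) = \sum_(i <- r | P i) T (F i).
Proof. exact: (big_morph T TD T0). Qed.

Lemma Tword ys : T (word ys) =
  \sum_(b <- masks (size ys)) word (mask b ys) * word (mask (map negb b) ys).
Proof. by rewrite /T hword; apply: eq_bigr => b _; rewrite mul1r. Qed.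

Lemma Tad_word x ys :
  T (iota x * word ys - word ys * iota x) = iota x * T (word ys) - T (word ys) * iota x.
Proof.
rewrite TB /T !hM hi !opE_mul /= !hword mul1r.
rewrite mulr_sumr mulr_suml -big_split /= -!sumrB.
by apply: eq_bigr => b _ /=; rewrite !mul1r mulrDr addrKA !mulrA.
Qed.


Definition WS (u : U) : Prop :=
  exists s : seq (K * seq V), u = \sum_(p <- s) p.1 *: word p.2.

Lemma WS0 : WS 0.
Proof. by exists [::]; rewrite big_nil. Qed.
Lemma WS1 : WS 1.
Proof. by exists [:: (1, [::])]; rewrite big_seq1 scale1r word_nil. Qed.
Lemma WSD u w : WS u -> WS w -> WS (u + w).
Proof. by move=> [s1 ->] [s2 ->]; exists (s1 ++ s2); rewrite big_cat. Qed.
Lemma WSZ a u : WS u -> WS (a *: u).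
Proof.
move=> [s ->]; exists [seq (a * p.1, p.2) | p <- s].
by rewrite big_map scaler_sumr; apply: eq_bigr => p _ /=; rewrite scalerA.
Qed.
Lemma WSM u w : WS u -> WS w -> WS (u * w).
Proof.
move=> [s1 ->] [s2 ->].
exists [seq (p.1 * q.1, p.2 ++ q.2) | p <- s1, q <- s2].
rewrite big_allpairs_dep mulr_suml; apply: eq_bigr => p _.
rewrite mulr_sumr; apply: eq_bigr => q _ /=.
by rewrite word_cat -scalerAl -scalerAr scalerA.
Qed.
Lemma WSi x : WS (iota x).
Proof. by exists [:: (1, [:: x])]; rewrite big_seq1 scale1r /word big_seq1. Qed.

Lemma WS_all u : WS u.
Proof. exact: (gen_all WS1 WS0 WSD WSZ WSM Henv WSi). Qed.


Lemma Tad x u : T (iota x * u - u * iota x) = iota x * T u - T u * iota x.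
Proof.
have [s ->] := WS_all u.
rewrite mulr_sumr mulr_suml -sumrB !Tsum mulr_sumr mulr_suml -sumrB.
apply: eq_bigr => p _.
by rewrite -scalerAr -scalerAl -scalerBr TZ Tad_word TZ scalerBr scalerAr scalerAl.
Qed.

Definition CS (c : U) : Prop :=
  exists s : seq (U * U), c = \sum_(p <- s) (p.1 * p.2 - p.2 * p.1).

Lemma CS0 : CS 0.
Proof. by exists [::]; rewrite big_nil. Qed.
Lemma CSD u w : CS u -> CS w -> CS (u + w).
Proof. by move=> [s1 ->] [s2 ->]; exists (s1 ++ s2); rewrite big_cat. Qed.
Lemma CSZ a u : CS u -> CS (a *: u).
Proof.
move=> [s ->]; exists [seq (a *: p.1, p.2) | p <- s].
rewrite big_map scaler_sumr; apply: eq_bigr => p _ /=.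
by rewrite scalerBr scalerAl scalerAr.
Qed.
Lemma CSc a b : CS (a * b - b * a).
Proof. by exists [:: (a, b)]; rewrite big_seq1. Qed.
Lemma CSsum (I : Type) (r : seq I) (F : I -> U) :
  (forall i, CS (F i)) -> CS (\sum_(i <- r) F i).
Proof.
move=> H; elim: r => [|i r IH]; first by rewrite big_nil; exact: CS0.
by rewrite big_cons; apply: CSD.
Qed.

Lemma T_comm_word xs b : CS (T (word xs * b - b * word xs)).
Proof.
elim: xs b => [|x xs IH] b.
  by rewrite word_nil mul1r mulr1 subrr T0; exact: CS0.
have -> : word (x :: xs) * b - b * word (x :: xs) =
  (iota x * (word xs * b) - (word xs * b) * iota x) +
  (word xs * (b * iota x) - (b * iota x) * word xs).
  by rewrite word_cons !mulrA addrA subrK.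
by rewrite TD Tad; apply: CSD; [exact: CSc | exact: IH].
Qed.

Lemma T_comm a b : CS (T (a * b - b * a)).
Proof.
have [s ->] := WS_all a.
rewrite mulr_suml mulr_sumr -sumrB Tsum; apply: CSsum => p.
by rewrite -scalerAl -scalerAr -scalerBr TZ; apply: CSZ; exact: T_comm_word.
Qed.

Lemma T_CS c : CS c -> CS (T c).
Proof. by move=> [s ->]; rewrite Tsum; apply: CSsum => p; exact: T_comm. Qed.


Lemma perm_masks (T0 : eqType) (b : seq bool) (l : seq T0) : size b = size l ->
  perm_eq (mask b l ++ mask (map negb b) l) l.
Proof.
elim: l b => [|x l IH] [|c b] //= [] /IH e.
case: c => /=; first by rewrite perm_cons.
by rewrite -cat1s perm_catCA /= perm_cons.
Qed.

Lemma mask_perm (m : nat) (b : seq bool) : size b = m ->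
  exists p : 'S_m, mask b (enum 'I_m) ++ mask (map negb b) (enum 'I_m) = [seq p i | i <- enum 'I_m].
Proof.
move=> sb.
have : perm_eq (mask b (enum 'I_m) ++ mask (map negb b) (enum 'I_m)) (ord_tuple m).
  by rewrite val_ord_tuple perm_masks // size_enum_ord.
move=> /tuple_permP [p ->]; exists p.
by apply: eq_map => i; rewrite tnth_ord_tuple.
Qed.

Lemma sum_const_seq (I : Type) (r : seq I) (c : U) : \sum_(i <- r) c = c *+ size r.
Proof. by elim: r => [|i r IH]; rewrite ?big_nil ?big_cons ?IH ?mulrS. Qed.

Lemma prod_word m (x : m.-tuple V) (s : 'S_m) :
  \prod_(i < m) iota (tnth x (s i)) = word [seq tnth x (s i) | i <- enum 'I_m].
Proof. by rewrite /word big_map [index_enum _]unlock enumT. Qed.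

Lemma mask_map_cat (A B : Type) (f : A -> B) (b c : seq bool) (l : seq A) :
  mask b (map f l) ++ mask c (map f l) = map f (mask b l ++ mask c l).
Proof. by rewrite map_cat !map_mask. Qed.

Lemma Tsym m (x : m.-tuple V) : T (symmetrize iota x) = (2 ^ m)%:R *: symmetrize iota x.
Proof.
rewrite /symmetrize TZ Tsum.
under eq_bigr => s _ do rewrite prod_word Tword size_map size_enum_ord.
rewrite exchange_big /=.
have E : forall b, b \in masks m ->
  \sum_(s : 'S_m) word (mask b [seq tnth x (s i) | i <- enum 'I_m]) *
     word (mask (map negb b) [seq tnth x (s i) | i <- enum 'I_m]) =
  \sum_(s : 'S_m) \prod_(i < m) iota (tnth x (s i)).
  move=> b /masks_size /mask_perm [p ep].
  rewrite [RHS](reindex_inj (mulgI p)) /=; apply: eq_bigr => s _.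
  rewrite prod_word -word_cat mask_map_cat ep -map_comp.
  by congr word; apply: eq_map => i /=; rewrite permM.
rewrite (eq_big_seq _ E) sum_const_seq size_masks.
by rewrite scalerA mulrC -scalerA scaler_nat.
Qed.


Fixpoint Pl (l : seq nat) (v : U) : U :=
  if l is j :: l' then T (Pl l' v) - (2 ^ j)%:R *: Pl l' v else v.

Lemma Pl0 l : Pl l 0 = 0.
Proof. by elim: l => //= j l ->; rewrite T0 scaler0 subrr. Qed.
Lemma PlD l u w : Pl l (u + w) = Pl l u + Pl l w.
Proof.
elim: l => //= j l ->; rewrite TD scalerDr opprD.
by rewrite addrACA.
Qed.
Lemma PlZ l a u : Pl l (a *: u) = a *: Pl l u.
Proof. by elim: l => //= j l ->; rewrite TZ scalerBr !scalerA mulrC. Qed.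
Lemma Plsum l (I : Type) (r : seq I) (F : I -> U) :
  Pl l (\sum_(i <- r) F i) = \sum_(i <- r) Pl l (F i).
Proof. exact: (big_morph (Pl l) (PlD l) (Pl0 l)). Qed.
Lemma Pl_eig l c t : T t = c *: t -> Pl l t = (\prod_(j <- l) (c - (2 ^ j)%:R)) *: t.
Proof.
move=> e; elim: l => [|j l IH] /=; first by rewrite big_nil scale1r.
rewrite IH TZ e big_cons !scalerA -scalerBl; congr (_ *: _).
by rewrite mulrC mulrBl.
Qed.
Lemma CSN u : CS u -> CS (- u).
Proof. by move=> /(CSZ (-1)); rewrite scaleN1r. Qed.
Lemma Pl_CS l c : CS c -> CS (Pl l c).
Proof.
elim: l => //= j l IH /IH H; apply: CSD; first exact: T_CS.
by apply: CSN; apply: CSZ.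
Qed.

Lemma T_inSym m u : in_Sym iota m u -> T u = (2 ^ m)%:R *: u.
Proof.
move=> [n [c [xs ->]]]; rewrite Tsum scaler_sumr; apply: eq_bigr => j _.
by rewrite TZ Tsym !scalerA (mulrC (c j)).
Qed.

Hypothesis Hchar : [pchar K] =i pred0.

Lemma natr_injK a b : (a%:R : K) = b%:R -> a = b.
Proof.
have H := (pcharf0P K).1 Hchar.
wlog ab : a b / (a <= b)%N.
  by move=> W e; case: (leqP a b) => [/W -> //|/ltnW /W]; move=> /(_ (esym e)).
move=> e; have /eqP := e; rewrite -(subnKC ab) natrD -subr_eq0 opprD addrA subrr add0r.
by rewrite oppr_eq0 H => /eqP ->; rewrite addn0.
Qed.

Lemma direct N (us : 'I_N -> U) : (forall m : 'I_N, in_Sym iota m (us m)) ->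
  CS (\sum_(m < N) us m) -> forall m : 'I_N, CS (us m).
Proof.
move=> Hs Hc m.
pose l := [seq j <- seq.iota 0 N | j != nat_of_ord m].
have := Pl_CS l Hc; rewrite Plsum.
rewrite (bigD1 m) //= big1 ?addr0; last first.
  move=> k km; rewrite (Pl_eig l (T_inSym (Hs k))).
  rewrite (big_rem (nat_of_ord k)) /=; first by rewrite subrr mul0r scale0r.
  by rewrite mem_filter mem_iota /= ltn_ord andbT; apply/eqP => /val_inj; apply/eqP.
rewrite (Pl_eig l (T_inSym (Hs m))) => /(CSZ (\prod_(j <- l) ((2 ^ m)%:R - (2 ^ j)%:R))^-1).
rewrite scalerA mulVf ?scale1r //.
rewrite prodf_seq_neq0; apply/allP => j; rewrite mem_filter => /andP [jm _] /=.
rewrite subr_eq0; apply/eqP => /natr_injK /eqP; rewrite eqn_exp2l //.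
by rewrite eq_sym (negbTE jm).
Qed.


Definition WL (n : nat) (u : U) : Prop :=
  exists s : seq (K * seq V), all (fun p => size p.2 < n)%N s /\ u = \sum_(p <- s) p.1 *: word p.2.

Lemma WL0 n : WL n 0.
Proof. by exists [::]; rewrite big_nil. Qed.
Lemma WLD n u w : WL n u -> WL n w -> WL n (u + w).
Proof.
move=> [s1 [a1 ->]] [s2 [a2 ->]]; exists (s1 ++ s2).
by rewrite all_cat a1 a2 big_cat.
Qed.
Lemma WLZ n a u : WL n u -> WL n (a *: u).
Proof.
move=> [s [al ->]]; exists [seq (a * p.1, p.2) | p <- s]; split.
  by rewrite all_map; apply: sub_all al => p.
by rewrite big_map scaler_sumr; apply: eq_bigr => p _ /=; rewrite scalerA.
Qed.
Lemma WLN n u : WL n u -> WL n (- u).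
Proof. by move=> /(WLZ (-1)); rewrite scaleN1r. Qed.
Lemma WLw n ys : (size ys < n)%N -> WL n (word ys).
Proof. by move=> hs; exists [:: (1, ys)]; rewrite /= hs big_seq1 scale1r. Qed.
Lemma WLmon n n' u : (n <= n')%N -> WL n u -> WL n' u.
Proof.
move=> nn [s [al ->]]; exists s; split => //.
by apply: sub_all al => p /= /leq_trans; apply.
Qed.
Lemma WLi n x u : WL n u -> WL n.+1 (iota x * u).
Proof.
move=> [s [al ->]]; exists [seq (p.1, x :: p.2) | p <- s]; split.
  by rewrite all_map; apply: sub_all al => p.
rewrite big_map mulr_sumr; apply: eq_bigr => p _ /=.
by rewrite -scalerAr word_cons.
Qed.

Lemma swap_word z x w :
  word (z :: x :: w) - word (x :: z :: w) = word (br z x :: w).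
Proof. by rewrite !word_cons iotaB !mulrA mulrBl. Qed.

Lemma move_word z1 x z2 :
  WL (size z1 + size z2).+1 (word (z1 ++ x :: z2) - word (x :: z1 ++ z2)).
Proof.
elim: z1 => [|z z1 IH] /=; first by rewrite subrr; exact: WL0.
have -> : word (z :: z1 ++ x :: z2) - word (x :: z :: z1 ++ z2) =
  iota z * (word (z1 ++ x :: z2) - word (x :: z1 ++ z2)) +
  (word (z :: x :: z1 ++ z2) - word (x :: z :: z1 ++ z2)).
  by rewrite mulrBr -!word_cons addrA subrK.
apply: WLD; first by apply: WLi.
by rewrite swap_word; apply: WLw; rewrite /= size_cat.
Qed.

Lemma perm_word ys zs : perm_eq ys zs -> WL (size ys) (word ys - word zs).
Proof.
elim: ys zs => [|x ys IH] zs.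
  by move=> /perm_size/esym/size0nil ->; rewrite subrr; exact: WL0.
move=> pe.
have xz : x \in zs by rewrite -(perm_mem pe) mem_head.
have [z1 [z2 ez]] : exists z1 z2, zs = z1 ++ x :: z2.
  by case/splitPr: xz => z1 z2; exists z1, z2.
subst zs.
have pe' : perm_eq ys (z1 ++ z2).
  rewrite -(perm_cons x); apply: (perm_trans pe); rewrite -[x :: z2]cat1s perm_catCA /=; exact: perm_refl.
have -> : word (x :: ys) - word (z1 ++ x :: z2) =
  iota x * (word ys - word (z1 ++ z2)) - (word (z1 ++ x :: z2) - word (x :: z1 ++ z2)).
  by rewrite mulrBr -!word_cons opprB addrA subrK.
apply: WLD; first by apply: WLi; apply: IH.
apply: WLN; have := move_word z1 x z2.
by rewrite -size_cat -(perm_size pe') /=.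
Qed.


Definition symseq (l : seq V) : U := symmetrize iota (in_tuple l).

Definition SAll (u : U) : Prop :=
  exists s : seq (K * seq V), u = \sum_(p <- s) p.1 *: symseq p.2.

Lemma SA0 : SAll 0.
Proof. by exists [::]; rewrite big_nil. Qed.
Lemma SAD u w : SAll u -> SAll w -> SAll (u + w).
Proof. by move=> [s1 ->] [s2 ->]; exists (s1 ++ s2); rewrite big_cat. Qed.
Lemma SAZ a u : SAll u -> SAll (a *: u).
Proof.
move=> [s ->]; exists [seq (a * p.1, p.2) | p <- s].
by rewrite big_map scaler_sumr; apply: eq_bigr => p _ /=; rewrite scalerA.
Qed.
Lemma SAsym l : SAll (symseq l).
Proof. by exists [:: (1, l)]; rewrite big_seq1 scale1r. Qed.

Lemma WL_SA k u : (forall ys, (size ys < k)%N -> SAll (word ys)) -> WL k u -> SAll u.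
Proof.
move=> H [s [al ->]]; elim: s al => [|p s IH] /=; first by move=> _; rewrite big_nil; exact: SA0.
by move=> /andP [hp al]; rewrite big_cons; apply: SAD; [apply: SAZ; apply: H | apply: IH].
Qed.

Lemma fact_neq0 m : (m`!%:R : K) != 0.
Proof.
apply/eqP => e; have : (m`!%:R : K) = 0%:R by rewrite e.
by move/natr_injK => e0; have := fact_gt0 m; rewrite e0.
Qed.

Lemma word_sym_dec ys :
  word ys - symseq ys = ((size ys)`!%:R)^-1 *:
    \sum_(s : 'S_(size ys)) (word ys - word [seq tnth (in_tuple ys) (s i) | i <- enum 'I_(size ys)]).
Proof.
rewrite sumrB sumr_const card_Sn scalerBr -scaler_nat scalerA mulVf ?fact_neq0 // scale1r.
by congr (_ - _); rewrite /symseq /symmetrize; congr (_ *: _); apply: eq_bigr => s _; rewrite prod_word.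
Qed.

Lemma perm_Ls (ys : seq V) (s : 'S_(size ys)) :
  perm_eq [seq tnth (in_tuple ys) (s i) | i <- enum 'I_(size ys)] ys.
Proof. by apply/(@tuple_permP _ _ _ (in_tuple ys)); exists s. Qed.

Lemma word_SA n ys : (size ys < n)%N -> SAll (word ys).
Proof.
elim: n ys => [|n IH] ys //; rewrite ltnS => hs.
rewrite -(subrK (symseq ys) (word ys)); apply: SAD; last exact: SAsym.
rewrite word_sym_dec; apply: SAZ.
elim: (index_enum _) => [|s r IHr]; first by rewrite big_nil; exact: SA0.
rewrite big_cons; apply: SAD => //.
apply: (@WL_SA (size ys)); last by apply: perm_word; rewrite perm_sym perm_Ls.
by move=> zs hz; apply: IH; exact: leq_trans hz hs.
Qed.

Lemma all_SA u : SAll u.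
Proof.
have [s ->] := WS_all u.
elim: s => [|p s IH]; first by rewrite big_nil; exact: SA0.
by rewrite big_cons; apply: SAD => //; apply: SAZ; apply: (@word_SA (size p.2).+1).
Qed.


Lemma sym_tuple m (t : m.-tuple V) : symmetrize iota t = symseq (val t).
Proof.
case: t => l e /=; have e' := eqP e; subst m.
by congr (symmetrize iota _); apply: val_inj.
Qed.

Lemma sum_ord_enum n (F : 'I_n -> U) : \sum_(j < n) F j = \sum_(j <- enum 'I_n) F j.
Proof. by rewrite [index_enum _]unlock enumT. Qed.

Lemma in_comm_CS c : in_comm c -> CS c.
Proof.
move=> [n [a [b ->]]]; exists [seq (a j, b j) | j <- enum 'I_n].
by rewrite big_map sum_ord_enum.
Qed.

Lemma CS_in_comm c : CS c -> in_comm c.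
Proof.
move=> [s ->]; exists (size s), (fun j => (nth (0, 0) s j).1), (fun j => (nth (0, 0) s j).2).
by rewrite (big_nth (0, 0)) big_mkord.
Qed.

Lemma part1 u : exists (N : nat) (us : 'I_N -> U),
      (forall m : 'I_N, in_Sym iota m (us m)) /\
      in_comm (u - \sum_(m < N) us m).
Proof.
have [s ->] := all_SA u.
pose N := (\max_(p <- s) size p.2).+1.
pose us := fun m : 'I_N => \sum_(p <- s)
   (if size p.2 == m then p.1 else 0) *: symmetrize iota (insubd (nseq_tuple m (0 : V)) p.2).
exists N, us; split.
  move=> m; exists (size s),
    (fun j => if size (nth (0, [::]) s j).2 == m then (nth (0, [::]) s j).1 else 0),
    (fun j => insubd (nseq_tuple m (0 : V)) (nth (0, [::]) s j).2).
  by rewrite /us (big_nth (0, [::])) big_mkord.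
suff -> : \sum_(m < N) us m = \sum_(p <- s) p.1 *: symseq p.2.
  by rewrite subrr; exists 0%N, (fun _ => 0), (fun _ => 0); rewrite big_ord0.
rewrite /us exchange_big /=; apply: eq_big_seq => p ps.
have hp : (size p.2 < N)%N.
  by rewrite ltnS; apply: (@leq_bigmax_seq _ _ _ (fun p => size p.2)).
rewrite (bigD1 (Ordinal hp)) //= big1 ?addr0; last first.
  move=> m /eqP mp; case: eqP => [e|_]; last by rewrite scale0r.
  by case: mp; apply: val_inj.
by rewrite eqxx sym_tuple val_insubd eqxx.
Qed.

End Main.

Unset Implicit Arguments.

Theorem theorem3p1 (K : fieldType) (Hchar : [pchar K] =i pred0)
  (V : lmodType K) (br : V -> V -> V) (Hlie : is_lie_bracket br)
  (U : algType K) (iota : V -> U) (Henv : is_enveloping br iota) :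
  (* the images |Sym^m g| span |U(g)| *)
  (forall u : U, exists (N : nat) (us : 'I_N -> U),
      (forall m : 'I_N, in_Sym iota m (us m)) /\
      in_comm (u - \sum_(m < N) us m)) /\
  (* and the sum of the images is direct *)
  (forall (N : nat) (us : 'I_N -> U),
      (forall m : 'I_N, in_Sym iota m (us m)) ->
      in_comm (\sum_(m < N) us m) ->
      forall m : 'I_N, in_comm (us m)).
Proof.
have [[h [hh hi]] _] := (proj2 Henv) _ _ (phi_lie Henv).
split; first exact: part1 Henv Hchar.
move=> N us Hs Hc m; apply: CS_in_comm; apply: (direct Henv hh hi Hchar Hs).
exact: in_comm_CS.
Qed.
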